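(* Let $\varphi : X \to X$ be a morphism in $\mathscr{C}$ and let $n\geq 2$ be an integer. Then $\varphi$ is core invertible if and only if there exists an annihilator $\eta : N\to X$ of $\varphi$ such that $\mu=\varphi^{n}+\eta^{*}\eta : X\to X$ is invertible. In this case $$\varphi^{\mathrm{core}}=\varphi^{n-1}\mu^{-1}.$$
   Context: $\mathscr{C}$ is an additive category with an involution $*$: a map on morphisms sending $\varphi : X\to Y$ to $\varphi^* : Y \to X$ such that $(\varphi^* )^*=\varphi$, $(\varphi\psi)^*=\psi^*\varphi^*$ and $(\varphi+\phi)^*=\varphi^*+\phi^*$. Composition is written left to right: for $\varphi : X\to Y$ and $\psi : Y\to Z$, $\varphi\psi : X \to Z$ means ''first $\varphi$, then $\psi$''. An annihilator of $\varphi : X\to Y$ is any morphism $\eta : N\to X$, for any object $N$, with $\eta\varphi=0$. A morphism is invertible if it has a two-sided inverse. For $\varphi : X\to X$, a core inverse of $\varphi$ is a morphism $\chi : X\to X$ with $(\varphi\chi)^*=\varphi\chi$, $\varphi\chi^2=\chi$ and $\chi\varphi^2=\varphi$. It is unique when it exists and is denoted $\varphi^{\mathrm{core}}$. *)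

(* Defs.v *)
From HB Require Import structures.
From mathcomp Require Import all_boot all_order all_algebra.
Set Implicit Arguments. Unset Strict Implicit. Unset Printing Implicit Defensive.
Import GRing.Theory.
Local Open Scope ring_scope.

(* An additive category with involution.  Composition is written
   left to right: mcomp f g = "first f, then g". *)
Record AddCatInv := {
  Obj : Type;
  Mor : Obj -> Obj -> zmodType;
  mcomp : forall X Y Z : Obj, Mor X Y -> Mor Y Z -> Mor X Z;
  idm : forall X : Obj, Mor X X;
  compA : forall (X Y Z W : Obj) (f : Mor X Y) (g : Mor Y Z) (h : Mor Z W),
      mcomp (mcomp f g) h = mcomp f (mcomp g h);
  comp1m : forall (X Y : Obj) (f : Mor X Y), mcomp (idm X) f = f;
  compm1 : forall (X Y : Obj) (f : Mor X Y), mcomp f (idm Y) = f;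
  compDl : forall (X Y Z : Obj) (f f' : Mor X Y) (g : Mor Y Z),
      mcomp (f + f') g = mcomp f g + mcomp f' g;
  compDr : forall (X Y Z : Obj) (f : Mor X Y) (g g' : Mor Y Z),
      mcomp f (g + g') = mcomp f g + mcomp f g';
  zobj : Obj;
  zobj_id : idm zobj = 0;
  biprod : Obj -> Obj -> Obj;
  bi_in1 : forall X Y, Mor X (biprod X Y);
  bi_in2 : forall X Y, Mor Y (biprod X Y);
  bi_pr1 : forall X Y, Mor (biprod X Y) X;
  bi_pr2 : forall X Y, Mor (biprod X Y) Y;
  bi_in1pr1 : forall X Y, mcomp (bi_in1 X Y) (bi_pr1 X Y) = idm X;
  bi_in2pr2 : forall X Y, mcomp (bi_in2 X Y) (bi_pr2 X Y) = idm Y;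
  bi_in1pr2 : forall X Y, mcomp (bi_in1 X Y) (bi_pr2 X Y) = 0;
  bi_in2pr1 : forall X Y, mcomp (bi_in2 X Y) (bi_pr1 X Y) = 0;
  bi_sum : forall X Y, mcomp (bi_pr1 X Y) (bi_in1 X Y)
                       + mcomp (bi_pr2 X Y) (bi_in2 X Y) = idm (biprod X Y);
  star : forall X Y : Obj, Mor X Y -> Mor Y X;
  starK : forall (X Y : Obj) (f : Mor X Y), star (star f) = f;
  starM : forall (X Y Z : Obj) (f : Mor X Y) (g : Mor Y Z),
      star (mcomp f g) = mcomp (star g) (star f);
  starD : forall (X Y : Obj) (f g : Mor X Y), star (f + g) = star f + star g
}.

Arguments Mor : clear implicits.
Arguments mcomp {_ _ _ _} _ _.
Arguments idm {_} _.
Arguments star {_ _ _} _.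

Fixpoint mpow (C : AddCatInv) (X : Obj C) (f : Mor C X X) (n : nat) : Mor C X X :=
  match n with
  | 0%N => idm X
  | k.+1 => mcomp (mpow f k) f
  end.

Definition annihilator (C : AddCatInv) (N X Y : Obj C)
  (eta : Mor C N X) (phi : Mor C X Y) : Prop := mcomp eta phi = 0.

Definition is_inverse (C : AddCatInv) (X Y : Obj C) (f : Mor C X Y) (g : Mor C Y X) : Prop :=
  mcomp f g = idm X /\ mcomp g f = idm Y.

Definition invertible (C : AddCatInv) (X Y : Obj C) (f : Mor C X Y) : Prop :=
  exists g : Mor C Y X, is_inverse f g.

Definition is_core_inverse (C : AddCatInv) (X : Obj C) (phi chi : Mor C X X) : Prop :=
  [/\ star (mcomp phi chi) = mcomp phi chi,
      mcomp phi (mcomp chi chi) = chi &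
      mcomp chi (mcomp phi phi) = phi].

Definition core_invertible (C : AddCatInv) (X : Obj C) (phi : Mor C X X) : Prop :=
  exists chi, is_core_inverse phi chi.

(* Main.v *)
Require Import Defs.
From mathcomp Require Import all_boot all_order all_algebra.
Set Implicit Arguments. Unset Strict Implicit. Unset Printing Implicit Defensive.
Import GRing.Theory.
Local Open Scope ring_scope.
Local Notation "f ⊙ g" := (mcomp f g) (at level 40, left associativity).

Definition mA := Defs.compA.
Lemma comp0m (C : AddCatInv) (X Y Z : Obj C) (g : Mor C Y Z) : (0 : Mor C X Y) ⊙ g = 0.
Proof. have h := compDl (0 : Mor C X Y) 0 g; rewrite addr0 in h.
by apply: (@addrI _ ((0 : Mor C X Y) ⊙ g)); rewrite addr0 -h. Qed.
Lemma compm0 (C : AddCatInv) (X Y Z : Obj C) (f : Mor C X Y) : f ⊙ (0 : Mor C Y Z) = 0.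
Proof. have h := compDr f (0 : Mor C Y Z) 0; rewrite addr0 in h.
by apply: (@addrI _ (f ⊙ (0 : Mor C Y Z))); rewrite addr0 -h. Qed.
Lemma compNl (C : AddCatInv) (X Y Z : Obj C) (f : Mor C X Y) (g : Mor C Y Z) : (- f) ⊙ g = - (f ⊙ g).
Proof. by apply: (@addrI _ (f ⊙ g)); rewrite -compDl !subrr comp0m. Qed.
Lemma compNr (C : AddCatInv) (X Y Z : Obj C) (f : Mor C X Y) (g : Mor C Y Z) : f ⊙ (- g) = - (f ⊙ g).
Proof. by apply: (@addrI _ (f ⊙ g)); rewrite -compDr !subrr compm0. Qed.
Lemma compBl (C : AddCatInv) (X Y Z : Obj C) (f f' : Mor C X Y) (g : Mor C Y Z) : (f - f') ⊙ g = f ⊙ g - f' ⊙ g.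
Proof. by rewrite compDl compNl. Qed.
Lemma compBr (C : AddCatInv) (X Y Z : Obj C) (f : Mor C X Y) (g g' : Mor C Y Z) : f ⊙ (g - g') = f ⊙ g - f ⊙ g'.
Proof. by rewrite compDr compNr. Qed.
Lemma star0 (C : AddCatInv) (X Y : Obj C) : star (0 : Mor C X Y) = 0.
Proof. have h := starD (0 : Mor C X Y) 0; rewrite addr0 in h.
by apply: (@addrI _ (star (0 : Mor C X Y))); rewrite addr0 -h. Qed.
Lemma starN (C : AddCatInv) (X Y : Obj C) (f : Mor C X Y) : star (- f) = - star f.
Proof. by apply: (@addrI _ (star f)); rewrite -starD !subrr star0. Qed.
Lemma starB (C : AddCatInv) (X Y : Obj C) (f g : Mor C X Y) : star (f - g) = star f - star g.
Proof. by rewrite starD starN. Qed.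
Lemma star_id (C : AddCatInv) (X : Obj C) : star (idm X) = idm X.
Proof. have h := starM (idm X) (star (idm X)). rewrite !comp1m !starK in h.
by rewrite comp1m in h; rewrite -h. Qed.

Lemma mpowS' (C : AddCatInv) (X : Obj C) (f : Mor C X X) k : mpow f k.+1 = f ⊙ mpow f k.
Proof. elim: k => [|k IH] /=; first by rewrite comp1m compm1.
by rewrite /= in IH; rewrite {1}IH mA. Qed.
Lemma mpowD (C : AddCatInv) (X : Obj C) (f : Mor C X X) a b : mpow f (a + b) = mpow f a ⊙ mpow f b.
Proof. elim: b => [|b IH]; first by rewrite addn0 compm1.
by rewrite addnS /= IH mA. Qed.
Lemma mpowC (C : AddCatInv) (X : Obj C) (f : Mor C X X) a b : mpow f a ⊙ mpow f b = mpow f b ⊙ mpow f a.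
Proof. by rewrite -!mpowD addnC. Qed.
Lemma star_mpow (C : AddCatInv) (X : Obj C) (f : Mor C X X) k : star (mpow f k) = mpow (star f) k.
Proof. elim: k => [|k IH] /=; first exact: star_id.
by rewrite starM IH -mpowS'. Qed.

Lemma inv_lemma (C : AddCatInv) (X : Obj C) (A B P Q : Mor C X X) :
  Q = idm X - P -> A⊙B = P -> B⊙Q=0 -> Q⊙B = 0 -> Q⊙A = 0 -> P⊙A = A ->
  B⊙A⊙P = P -> Q⊙Q = Q -> is_inverse (A + Q) (B + Q - B⊙A⊙Q).
Proof.
move=> hQ hAB hBQ hQB hQA hPA hBAP hQQ; split.
- rewrite compDl !compBr !compDr hAB hQB hQQ -!mA hAB hPA hQB !mA.
  rewrite comp0m addrK add0r subr0 hQ addrC subrK //.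
- rewrite compDr !compBl !compDl.
 rewrite hQA hBQ hQQ !mA hQA hQQ !compm0 subr0 addr0 add0r.
  have -> : B ⊙ (A ⊙ Q) = B⊙A - P by rewrite -mA hQ compBr compm1 hBAP.
  by rewrite opprB addrCA (addrC (B⊙A)) subrK hQ subrK.
Qed.

Lemma core_basic (C : AddCatInv) (X : Obj C) (phi chi : Mor C X X) :
  is_core_inverse phi chi -> phi ⊙ chi ⊙ phi = phi /\ chi ⊙ phi ⊙ chi = chi.
Proof.
case=> h1 h2 h3.
have h2g : forall Y (g : Mor C X Y), phi⊙(chi⊙(chi⊙g)) = chi⊙g.
  by move=> Y g; rewrite -(mA chi chi g) -mA h2.
have h3g : forall Y (g : Mor C X Y), chi⊙(phi⊙(phi⊙g)) = phi⊙g.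
  by move=> Y g; rewrite -(mA phi phi g) -mA h3.
split.
- by rewrite -{2}h3 !mA h2g h3.
- by rewrite -{2}h2 !mA h3g h2.
Qed.

Lemma core_unique (C : AddCatInv) (X : Obj C) (phi chi psi : Mor C X X) :
  is_core_inverse phi chi -> is_core_inverse phi psi -> chi = psi.
Proof.
move=> hc hp; have [ha hb] := core_basic hc; have [ha' hb'] := core_basic hp.
case: hc => h1 h2 h3; case: hp => h1' h2' h3'.
have h2g : forall Y (g : Mor C X Y), phi⊙(chi⊙(chi⊙g)) = chi⊙g.
  by move=> Y g; rewrite -(mA chi chi g) -mA h2.
have e1 : phi⊙psi⊙(phi⊙chi) = phi⊙chi by rewrite -mA ha'.
have e2 : phi⊙chi⊙(phi⊙psi) = phi⊙psi by rewrite -mA ha.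
have s1 : phi⊙chi = phi⊙psi.
  by rewrite -h1 -{1}e1 starM h1 h1' e2.
have q1 : chi⊙phi = psi⊙phi⊙(chi⊙phi).
  by rewrite -{1}h2 -{1}h3' !mA h2g.
have q2 : psi⊙phi⊙(chi⊙phi) = psi⊙phi by rewrite mA -(mA phi chi phi) ha.
have hq : chi⊙phi = psi⊙phi by rewrite q1 q2.
by rewrite -hb hq mA s1 -mA hb'.
Qed.

Lemma formula (C : AddCatInv) (X : Obj C) (phi : Mor C X X) (k : nat)
  (N : Obj C) (eta : Mor C N X) (nu : Mor C X X) :
  eta ⊙ phi = 0 ->
  is_inverse (mpow phi k.+2 + star eta ⊙ eta) nu ->
  is_core_inverse phi (mpow phi k.+1 ⊙ nu).
Proof.
move=> hann [hmu hmu'].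
have F1 : star eta ⊙ eta ⊙ phi = 0 by rewrite mA hann compm0.
have F2 : star phi ⊙ (star eta ⊙ eta) = 0 by rewrite -mA -starM hann star0 comp0m.
have F3 : star (star eta ⊙ eta) = star eta ⊙ eta by rewrite starM starK.
have F4 : star (mpow phi k.+2) ⊙ (star eta ⊙ eta) = 0.
  by rewrite star_mpow [mpow _ k.+2]/= mA F2 compm0.
have F5 : star eta ⊙ eta ⊙ mpow phi k.+1 = 0 by rewrite mpowS' -mA F1 comp0m.
have F6 : star eta ⊙ eta ⊙ mpow phi k.+2 = 0 by rewrite mpowS' -mA F1 comp0m.
have G1 : star eta ⊙ eta ⊙ (mpow phi k.+2 + star eta ⊙ eta)
          = star eta ⊙ eta ⊙ (star eta ⊙ eta) by rewrite compDr F6 add0r.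
have G1' : star (mpow phi k.+2 + star eta ⊙ eta) ⊙ (star eta ⊙ eta)
          = star eta ⊙ eta ⊙ (star eta ⊙ eta) by rewrite starD F3 compDl F4 add0r.
have G2 : star eta ⊙ eta ⊙ nu = star nu ⊙ (star eta ⊙ eta).
  rewrite -{2}(compm1 (star eta ⊙ eta)) -hmu -(mA (star eta ⊙ eta)) G1 -G1' !mA.
  by rewrite -(mA (star nu)) -starM hmu star_id comp1m.
have G3 : mpow phi k.+2 ⊙ nu + star eta ⊙ eta ⊙ nu = idm X by rewrite -compDl.
have Gx : mpow phi k.+2 ⊙ nu = idm X - star eta ⊙ eta ⊙ nu by rewrite -G3 addrK.
have G4 : star (mpow phi k.+2 ⊙ nu) = mpow phi k.+2 ⊙ nu.
  by rewrite Gx starB star_id starM F3 -G2.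
have G5 : star phi ⊙ (mpow phi k.+2 ⊙ nu) = star phi.
  by rewrite Gx compBr compm1 -(mA (star phi)) F2 comp0m subr0.
have G6 : mpow phi k.+2 ⊙ nu ⊙ phi = phi.
  by have := congr1 star G5; rewrite starM starK G4.
have hMB : (mpow phi k.+2 + star eta ⊙ eta) ⊙ mpow phi k.+1
          = mpow phi k.+1 ⊙ mpow phi k.+2 by rewrite compDl F5 addr0 mpowC.
have G7 : mpow phi k.+1 ⊙ nu ⊙ phi = nu ⊙ mpow phi k.+2.
  rewrite -[LHS]comp1m -hmu' (mA nu) -(mA _ (mpow phi k.+1 ⊙ nu) phi).
  rewrite -(mA _ (mpow phi k.+1) nu) hMB (mA (mpow phi k.+1) (mpow phi k.+2) nu).
  by rewrite (mA (mpow phi k.+1) (mpow phi k.+2 ⊙ nu) phi) G6.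
have G8 : nu ⊙ (mpow phi k.+2 ⊙ phi) = phi.
  have hMp : (mpow phi k.+2 + star eta ⊙ eta) ⊙ phi = mpow phi k.+2 ⊙ phi
    by rewrite compDl F1 addr0.
  by rewrite -hMp -mA hmu' comp1m.
have hx : phi ⊙ (mpow phi k.+1 ⊙ nu) = mpow phi k.+2 ⊙ nu by rewrite -mA -mpowS'.
split.
- by rewrite hx G4.
- by rewrite -mA hx -mA (mpowS' phi k) -mA G6.
- by rewrite -mA G7 mA G8.
Qed.

Lemma forward (C : AddCatInv) (X : Obj C) (phi chi : Mor C X X) (k : nat) :
  is_core_inverse phi chi ->
  exists (N : Obj C) (eta : Mor C N X),
       annihilator eta phi /\ invertible (mpow phi k.+2 + mcomp (star eta) eta).
Proof.
move=> hc; have [ha hb] := core_basic hc; case: hc => h1 h2 h3.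
have h2g : forall Y (g : Mor C X Y), phi⊙(chi⊙(chi⊙g)) = chi⊙g.
  by move=> Y g; rewrite -(mA chi chi g) -mA h2.
have h3g : forall Y (g : Mor C X Y), chi⊙(phi⊙(phi⊙g)) = phi⊙g.
  by move=> Y g; rewrite -(mA phi phi g) -mA h3.
have hAB : forall j, mpow phi j.+1 ⊙ mpow chi j.+1 = phi ⊙ chi.
  elim=> [|j IH]; first by rewrite /= !comp1m.
  rewrite [mpow phi j.+2]/= (mA (mpow phi j.+1) phi) (mpowS' chi j.+1) (mpowS' chi j).
  by rewrite h2g -mpowS'.
have hBp : forall j, mpow chi j ⊙ mpow phi j.+1 = phi.
  elim=> [|j IH]; first by rewrite /= !comp1m.
  rewrite [mpow chi j.+1]/= (mpowS' phi j.+1) (mpowS' phi j).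
  by rewrite (mA (mpow chi j) chi) h3g -mpowS'.
pose P := phi ⊙ chi; pose Q := idm X - P.
have hpp : P ⊙ P = P by rewrite /P -(mA (phi ⊙ chi) phi chi) ha.
have hQphi : Q ⊙ phi = 0 by rewrite /Q compBl comp1m ha subrr.
have hchiQ : chi ⊙ Q = 0 by rewrite /Q compBr compm1 /P -mA hb subrr.
have hQchi : Q ⊙ chi = 0 by rewrite /Q compBl comp1m /P mA h2 subrr.
have hQQ : Q ⊙ Q = Q by rewrite {1}/Q compBl comp1m /Q compBr compm1 hpp subrr subr0.
have hsQ : star Q = Q by rewrite /Q starB star_id h1.
exists X, Q; split; first exact: hQphi.
rewrite hsQ hQQ; exists (mpow chi k.+2 + Q - mpow chi k.+2 ⊙ mpow phi k.+2 ⊙ Q).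
apply: inv_lemma => //.
- by rewrite [mpow chi _]/= mA hchiQ compm0.
- by rewrite mpowS' -mA hQchi comp0m.
- by rewrite mpowS' -mA hQphi comp0m.
- by rewrite mpowS' -mA ha.
- by rewrite /P -mA (mA (mpow chi k.+2) (mpow phi k.+2) phi) hBp.
Qed.

Theorem theorem2p8 (C : AddCatInv) (X : Obj C) (phi : Mor C X X) (n : nat)
    (hn : (2 <= n)%N) :
  (core_invertible phi <->
     exists (N : Obj C) (eta : Mor C N X),
       annihilator eta phi /\ invertible (mpow phi n + mcomp (star eta) eta))
  /\
  (forall (N : Obj C) (eta : Mor C N X) (muinv : Mor C X X),
      annihilator eta phi ->
      is_inverse (mpow phi n + mcomp (star eta) eta) muinv ->
      is_core_inverse phi (mcomp (mpow phi n.-1) muinv)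
      /\ (forall chi, is_core_inverse phi chi -> chi = mcomp (mpow phi n.-1) muinv)).
Proof.
case: n hn => [|[|k]] // _; split.
  split.
  - by case=> chi hc; exact: (forward k hc).
  - case=> N [eta [hann [nu hinv]]]; exists (mpow phi k.+1 ⊙ nu).
    exact: formula hann hinv.
move=> N eta muinv hann hinv; have hc := formula hann hinv.
split; first exact: hc.
move=> chi hchi; exact: core_unique hchi hc.
Qed.
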